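(* Let $L\in\{0,1\}$, $X$ and $A$ be jointly distributed discrete random variables with finite supports, such that conditioned on $L=0$ the message $A$ is independent of $X$, i.e. $\Pr(A=a\mid X=x,L=0)=\Pr(A=a\mid L=0)$ for all $a$ and all $x$ with $\Pr(X=x,L=0)>0$. Assume $\Pr(L=0\mid X=x)>0$ for all $x$ in the support of $X$. Then \[ I(X;A)\le \mathrm{susp}(X,A)-\mathrm{susp}(X) \] (where the right-hand side may be $+\infty$). If moreover $\Pr(L=0\mid X=x,A=a)>0$ whenever $\Pr(X=x,A=a)>0$, then equality holds if and only if $A$ has the same distribution as $A$ conditioned on $L=0$, i.e. $\Pr(A=a)=\Pr(A=a\mid L=0)$ for all $a$.
   Context: All logarithms are base $2$. For a random variable $Y$ (possibly a tuple of random variables) jointly distributed with $L\in\{0,1\}$ and a value $y$ with $\Pr(Y=y)>0$, the suspicion given $Y=y$ is $\mathrm{susp}(Y=y)=-\log\Pr(L=0\mid Y=y)\in[0,\infty]$, and the suspicion given $Y$ is $\mathrm{susp}(Y)=\sum_{y}\Pr(Y=y)\,\mathrm{susp}(Y=y)$. Thus $\mathrm{susp}(X,A)$ is the suspicion given the pair $(X,A)$. $I(\cdot;\cdot)$ is Shannon mutual information. (Interpretation: $L=1$ means ''Alice knows the secret $X$''; when $L=0$ she picks her message $A$ without regard to $X$.) *)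

(* Defs.v *)
From mathcomp Require Import all_boot.
From Stdlib Require Import Reals.
Set Implicit Arguments. Unset Strict Implicit. Unset Printing Implicit Defensive.

Open Scope R_scope.

Definition Rsum (T : finType) (f : T -> R) : R := \big[Rplus/0]_(t : T) f t.

Definition log2 (r : R) : R := ln r / ln 2.

Inductive ereal := Fin of R | PInf.

Definition eadd (x y : ereal) : ereal :=
  match x, y with
  | Fin a, Fin b => Fin (a + b)
  | _, _ => PInf
  end.

Definition ele (x y : ereal) : Prop :=
  match x, y with
  | Fin a, Fin b => a <= b
  | _, PInf => True
  | PInf, Fin _ => False
  end.

(* Subtraction x - y; only meaningful when y is finite
   (PInf - finite = PInf). The case y = PInf is a junk value (never used:
   in the theorem susp(X) is finite under the hypotheses). *)
Definition esub (x y : ereal) : ereal :=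
  match x, y with
  | Fin a, Fin b => Fin (a - b)
  | PInf, Fin _ => PInf
  | _, PInf => Fin 0
  end.

(* Generic suspicion of a random variable Y with values in a finite type T:
   q y = Pr(Y = y), q0 y = Pr(L = 0, Y = y).
   susp(Y=y) = - log Pr(L=0 | Y=y) (= +infinity when that probability is 0),
   susp(Y) = sum over y with Pr(Y=y) > 0 of Pr(Y=y) * susp(Y=y). *)
Definition susp_term (T : finType) (q0 q : T -> R) (y : T) : ereal :=
  if Rlt_dec 0 (q y) then
    if Req_EM_T (q0 y / q y) 0 then PInf
    else Fin (q y * - log2 (q0 y / q y))
  else Fin 0.

Definition susp (T : finType) (q0 q : T -> R) : ereal :=
  \big[eadd/Fin 0]_(y : T) susp_term q0 q y.

(* A joint distribution of (L, X, A): P l x a = Pr(L = l, X = x, A = a),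
   where L = 0 is encoded by [false] and L = 1 by [true]. *)
Section Joint.
Variables (X A : finType) (P : bool -> X -> A -> R).

Definition pXA (x : X) (a : A) : R := Rsum (fun l : bool => P l x a).
Definition pX (x : X) : R := Rsum (fun a : A => pXA x a).
Definition pA (a : A) : R := Rsum (fun x : X => pXA x a).
Definition pXA0 (x : X) (a : A) : R := P false x a.
Definition pX0 (x : X) : R := Rsum (fun a : A => P false x a).
Definition pA0 (a : A) : R := Rsum (fun x : X => P false x a).
Definition pL0 : R := Rsum (fun x : X => pX0 x).

Definition suspXA : ereal :=
  susp (fun xa : X * A => pXA0 xa.1 xa.2) (fun xa : X * A => pXA xa.1 xa.2).
Definition suspX : ereal := susp pX0 pX.

Definition mutinfo : R :=
  Rsum (fun xa : X * A =>
    if Rlt_dec 0 (pXA xa.1 xa.2)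
    then pXA xa.1 xa.2 * log2 (pXA xa.1 xa.2 / (pX xa.1 * pA xa.2))
    else 0).
End Joint.

(* Main.v *)
Require Import Defs.
From HB Require Import structures.
From mathcomp Require Import all_boot.
From Stdlib Require Import Reals Lra Classical.
Open Scope R_scope.

Lemma Rplus_assoc' : associative Rplus.
Proof. by move=> x y z; rewrite Rplus_assoc. Qed.
HB.instance Definition _ := Monoid.isComLaw.Build R 0 Rplus Rplus_assoc' Rplus_comm Rplus_0_l.

Lemma eadd_assoc : associative eadd.
Proof. by case=> [a|] [b|] [c|] //=; rewrite Rplus_assoc. Qed.
Lemma eadd_comm : commutative eadd.
Proof. by case=> [a|] [b|] //=; rewrite Rplus_comm. Qed.
Lemma eadd_0l : left_id (Fin 0) eadd.
Proof. by case=> [a|] //=; rewrite Rplus_0_l. Qed.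
HB.instance Definition _ := Monoid.isComLaw.Build ereal (Fin 0) eadd eadd_assoc eadd_comm eadd_0l.

Section Rsums.
Variable T : finType.
Implicit Types f g : T -> R.

Lemma Rsum_ext f g : (forall t, f t = g t) -> Rsum f = Rsum g.
Proof. by move=> H; apply: eq_bigr => t _. Qed.

Lemma Rsum_ge0 f : (forall t, 0 <= f t) -> 0 <= Rsum f.
Proof.
move=> H; rewrite /Rsum; apply: (big_ind (fun x => 0 <= x)) => //.
- by apply: Rle_refl.
- by move=> x y; lra.
Qed.

Lemma Rsum_ge_term f t : (forall t, 0 <= f t) -> f t <= Rsum f.
Proof.
move=> H; rewrite /Rsum (bigD1 t) //=.
have : 0 <= \big[Rplus/0]_(i | i != t) f i.
  apply: (big_ind (fun x => 0 <= x)) => //; [lra| by move=> x y; lra].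
lra.
Qed.

Lemma Rsum_add f g : Rsum (fun t => f t + g t) = Rsum f + Rsum g.
Proof. by rewrite /Rsum big_split. Qed.

Lemma Rsum_scal c f : Rsum (fun t => c * f t) = c * Rsum f.
Proof.
rewrite /Rsum; symmetry; apply: (big_morph (fun y => c * y)).
- by move=> x y; rewrite Rmult_plus_distr_l.
- by rewrite Rmult_0_r.
Qed.

Lemma Rsum_scalr c f : Rsum (fun t => f t * c) = Rsum f * c.
Proof. rewrite Rmult_comm -Rsum_scal; apply: Rsum_ext => t; ring. Qed.

Lemma Rsum_opp f : Rsum (fun t => - f t) = - Rsum f.
Proof.
have -> : - Rsum f = -1 * Rsum f by ring.
rewrite -Rsum_scal; apply: Rsum_ext => t; ring.
Qed.

Lemma Rsum_nz f : Rsum f <> 0 -> exists t, f t <> 0.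
Proof.
move=> H; apply: NNPP => H'; apply: H; rewrite /Rsum big1 // => t _.
by apply: NNPP => Ht; apply: H'; exists t.
Qed.

Lemma Rsum_eq0 f : (forall t, 0 <= f t) -> Rsum f = 0 -> forall t, f t = 0.
Proof. by move=> H H0 t; have := Rsum_ge_term f t H; have := H t; lra. Qed.

Lemma esum_fin g : \big[eadd/Fin 0]_(t : T) Fin (g t) = Fin (Rsum g).
Proof. by rewrite /Rsum; symmetry; apply: (big_morph Fin). Qed.

Lemma esum_inf (h : T -> ereal) t : h t = PInf -> \big[eadd/Fin 0]_(t : T) h t = PInf.
Proof. move=> H; rewrite (bigD1 t) //= H; by case: (\big[_/_]_(i | _) _). Qed.
End Rsums.
Arguments Rsum_ext {T}. Arguments Rsum_ge0 {T}. Arguments Rsum_ge_term {T}. Arguments Rsum_add {T}.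
Arguments Rsum_scal {T}. Arguments Rsum_scalr {T}. Arguments Rsum_opp {T}. Arguments Rsum_nz {T}.
Arguments Rsum_eq0 {T}. Arguments esum_fin {T}. Arguments esum_inf {T}.

Lemma Rsum_bool (f : bool -> R) : Rsum f = f true + f false.
Proof. by rewrite /Rsum big_bool. Qed.

Lemma Rsum_pair (X A : finType) (f : X -> A -> R) :
  Rsum (fun xa : X * A => f xa.1 xa.2) = Rsum (fun x => Rsum (fun a => f x a)).
Proof. by rewrite /Rsum pair_bigA. Qed.

Lemma Rsum_exch (X A : finType) (f : X -> A -> R) :
  Rsum (fun x => Rsum (fun a => f x a)) = Rsum (fun a => Rsum (fun x => f x a)).
Proof. by rewrite /Rsum exchange_big. Qed.

Lemma ifpos (r F : R) : 0 <= r -> (if Rlt_dec 0 r then r * F else 0) = r * F.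
Proof.
move=> H; destruct (Rlt_dec 0 r) as [h|h]; first by [].
have Hr : r = 0 by lra.
subst r; simpl; ring.
Qed.

Lemma lndiv x y : 0 < x -> 0 < y -> ln (x / y) = ln x - ln y.
Proof.
move=> hx hy; have hy' := Rinv_0_lt_compat _ hy.
rewrite /Rdiv ln_mult // ln_Rinv //.
Qed.

Lemma ln2_pos : 0 < ln 2.
Proof. have := ln_lt_2; lra. Qed.

Lemma ln_le u : 0 < u -> ln u <= u - 1.
Proof. move=> hu; have := exp_ineq1_le (ln u); rewrite exp_ln //; lra. Qed.

Lemma ln_eq u : 0 < u -> ln u = u - 1 -> u = 1.
Proof.
move=> hu He; case: (Req_dec (ln u) 0) => H.
  by rewrite -(exp_ln u hu) H exp_0.
by have := exp_ineq1 _ H; rewrite exp_ln //; lra.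
Qed.
Arguments Rsum_exch {X A}. Arguments Rsum_pair {X A}.

Section Main.
Variables (X A : finType) (P : bool -> X -> A -> R).
Hypothesis Pnn : forall l x a, 0 <= P l x a.
Hypothesis Psum : Rsum (fun l : bool => Rsum (fun x : X => Rsum (fun a : A => P l x a))) = 1.
Hypothesis Hind : forall (x : X) (a : A), 0 < pX0 P x ->
     P false x a / pX0 P x = pA0 P a / pL0 P.
Hypothesis HposX : forall x : X, 0 < pX P x -> 0 < pX0 P x / pX P x.

Lemma pXA_e x a : pXA P x a = P true x a + P false x a.
Proof. by rewrite /pXA Rsum_bool. Qed.
Lemma pXA_ge0 x a : 0 <= pXA P x a.
Proof. rewrite pXA_e; have := Pnn true x a; have := Pnn false x a; lra. Qed.
Lemma p0_le x a : P false x a <= pXA P x a.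
Proof. rewrite pXA_e; have := Pnn true x a; lra. Qed.
Lemma pX_ge x a : pXA P x a <= pX P x.
Proof. exact: (Rsum_ge_term (fun a => pXA P x a) a (fun t => pXA_ge0 x t)). Qed.
Lemma pA_ge x a : pXA P x a <= pA P a.
Proof. exact: (Rsum_ge_term (fun x => pXA P x a) x (fun t => pXA_ge0 t a)). Qed.
Lemma pX_ge0 x : 0 <= pX P x.
Proof. by apply: Rsum_ge0 => t; apply: pXA_ge0. Qed.
Lemma pA_ge0 a : 0 <= pA P a.
Proof. by apply: Rsum_ge0 => t; apply: pXA_ge0. Qed.
Lemma pA0_ge x a : P false x a <= pA0 P a.
Proof. exact: (Rsum_ge_term (fun x => P false x a) x (fun t => Pnn false t a)). Qed.
Lemma pA0_ge0 a : 0 <= pA0 P a.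
Proof. by apply: Rsum_ge0 => t; apply: Pnn. Qed.
Lemma pX0_ge0 x : 0 <= pX0 P x.
Proof. by apply: Rsum_ge0 => t; apply: Pnn. Qed.
Lemma pL0_ge x : pX0 P x <= pL0 P.
Proof. exact: (Rsum_ge_term (fun x => pX0 P x) x pX0_ge0). Qed.

Lemma pX0_pos x : 0 < pX P x -> 0 < pX0 P x.
Proof.
move=> h; have h1 := HposX x h.
have -> : pX0 P x = pX0 P x / pX P x * pX P x by field; lra.
by apply: Rmult_lt_0_compat.
Qed.

Lemma tot_pXA : Rsum (fun x => pX P x) = 1.
Proof.
rewrite -Psum /pX /pXA.
rewrite (Rsum_ext (fun x => Rsum (fun a => Rsum (fun l => P l x a)))
   (fun x => Rsum (fun l => Rsum (fun a => P l x a)))); last by move=> x; apply: Rsum_exch.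
by rewrite (Rsum_exch (fun x l => Rsum (fun a => P l x a))).
Qed.

Lemma tot_pA : Rsum (fun a => pA P a) = 1.
Proof.
rewrite -tot_pXA /pA /pX.
by rewrite (Rsum_exch (fun x a => pXA P x a)).
Qed.

Lemma tot_pA0 : Rsum (fun a => pA0 P a) = pL0 P.
Proof. by rewrite /pA0 /pL0 /pX0 (Rsum_exch (fun x a => P false x a)). Qed.

Lemma pL0_pos : 0 < pL0 P.
Proof.
have : Rsum (fun x => pX P x) <> 0 by rewrite tot_pXA; lra.
case/Rsum_nz => x hx.
have hx' : 0 < pX P x by have := pX_ge0 x; lra.
have := pX0_pos x hx'; have := pL0_ge x; lra.
Qed.

Lemma indep x a : 0 < pXA P x a -> P false x a = pX0 P x * (pA0 P a / pL0 P).
Proof.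
move=> h; have hX : 0 < pX P x by have := pX_ge x a; lra.
have h0 := pX0_pos x hX.
rewrite -(Hind x a h0); field; lra.
Qed.

Definition sX := Rsum (fun x => pX P x * - log2 (pX0 P x / pX P x)).

Lemma suspX_e : suspX P = Fin sX.
Proof.
rewrite /suspX /susp /sX -esum_fin; apply: eq_bigr => x _.
rewrite /susp_term; destruct (Rlt_dec 0 (pX P x)) as [h|h].
  have h1 := HposX x h.
  destruct (Req_EM_T (pX0 P x / pX P x) 0) as [e|e]; first lra.
  by [].
have e : pX P x = 0 by have := pX_ge0 x; lra.
change (Fin 0 = Fin (pX P x * - log2 (pX0 P x / pX P x))).
by rewrite e Rmult_0_l.
Qed.

Definition Hfin := forall x a, 0 < pXA P x a -> 0 < P false x a.
Definition sXA := Rsum (fun xa : X * A => pXA P xa.1 xa.2 * - log2 (P false xa.1 xa.2 / pXA P xa.1 xa.2)).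

Lemma suspXA_fin : Hfin -> suspXA P = Fin sXA.
Proof.
move=> hf; rewrite /suspXA /susp /sXA -esum_fin; apply: eq_bigr => [[x a]] _ /=.
rewrite /susp_term /=; destruct (Rlt_dec 0 (pXA P x a)) as [h|h].
  have h1 := hf x a h.
  destruct (Req_EM_T (pXA0 P x a / pXA P x a) 0) as [e|e].
    have : 0 < pXA0 P x a / pXA P x a by apply: Rdiv_lt_0_compat.
    lra.
  by [].
have e : pXA P x a = 0 by have := pXA_ge0 x a; lra.
change (Fin 0 = Fin (pXA P x a * - log2 (P false x a / pXA P x a))).
by rewrite e Rmult_0_l.
Qed.

Lemma suspXA_inf : ~ Hfin -> suspXA P = PInf.
Proof.
move=> hf.
have [x [a [h1 h2]]] : exists x a, 0 < pXA P x a /\ ~ 0 < P false x a.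
  apply: NNPP => H; apply: hf => x a h; apply: NNPP => h'; apply: H; by exists x, a.
have e : P false x a = 0 by have := Pnn false x a; lra.
rewrite /suspXA /susp (esum_inf _ (x, a)) // /susp_term /=.
destruct (Rlt_dec 0 (pXA P x a)) as [h|h]; last by [].
destruct (Req_EM_T (pXA0 P x a / pXA P x a) 0) as [e'|e']; first by [].
by exfalso; apply: e'; rewrite /pXA0 e /Rdiv Rmult_0_l.
Qed.

Lemma MI_e : mutinfo P = Rsum (fun xa : X * A => pXA P xa.1 xa.2 * log2 (pXA P xa.1 xa.2 / (pX P xa.1 * pA P xa.2))).
Proof. by apply: Rsum_ext => [[x a]] /=; rewrite ifpos //; apply: pXA_ge0. Qed.

Definition D := Rsum (fun a => pA P a * log2 (pA P a * pL0 P / pA0 P a)).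

Lemma sX_pair : sX = Rsum (fun xa : X * A => pXA P xa.1 xa.2 * - log2 (pX0 P xa.1 / pX P xa.1)).
Proof.
rewrite (Rsum_pair (fun x a => pXA P x a * - log2 (pX0 P x / pX P x))) /sX; apply: Rsum_ext => x.
by rewrite /pX Rsum_scalr.
Qed.

Lemma D_pair : D = Rsum (fun xa : X * A => pXA P xa.1 xa.2 * log2 (pA P xa.2 * pL0 P / pA0 P xa.2)).
Proof.
rewrite (Rsum_pair (fun x a => pXA P x a * log2 (pA P a * pL0 P / pA0 P a))) Rsum_exch /D; apply: Rsum_ext => a.
by rewrite {1}/pA Rsum_scalr.
Qed.

Lemma key : Hfin -> sXA = sX + mutinfo P + D.
Proof.
move=> hf; rewrite sX_pair MI_e D_pair -!Rsum_add /sXA; apply: Rsum_ext => [[x a]] /=.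
case: (Req_dec (pXA P x a) 0) => [->|hne]; first ring.
have hp : 0 < pXA P x a by have := pXA_ge0 x a; lra.
have hp0 := hf x a hp.
have hX : 0 < pX P x by have := pX_ge x a; lra.
have hA : 0 < pA P a by have := pA_ge x a; lra.
have hX0 := pX0_pos x hX.
have hA0 : 0 < pA0 P a by have := pA0_ge x a; lra.
have hL := pL0_pos.
have hi := indep x a hp.
have Hl : ln (P false x a) = ln (pX0 P x) + ln (pA0 P a) - ln (pL0 P).
  rewrite hi ln_mult ?lndiv //; [ring | by apply: Rdiv_lt_0_compat].
rewrite /log2 !lndiv //; try (apply: Rmult_lt_0_compat => //).
rewrite !ln_mult // Hl.
have := ln2_pos => h2.
field; lra.
Qed.

Definition q a := pA0 P a / pL0 P.
Definition g a := pA P a * log2 (pA P a * pL0 P / pA0 P a) + (-1 / ln 2) * pA P a + (1 / ln 2) * q a.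

Lemma D_g : D = Rsum g.
Proof.
rewrite /g !Rsum_add !Rsum_scal tot_pA.
have -> : Rsum q = 1.
  rewrite /q /Rdiv Rsum_scalr tot_pA0; have := pL0_pos; move=> h; field; lra.
rewrite /D; have h := ln2_pos; field; lra.
Qed.

Lemma pA0_pos : Hfin -> forall a, 0 < pA P a -> 0 < pA0 P a.
Proof.
move=> hf a h.
have : Rsum (fun x => pXA P x a) <> 0 by rewrite -/(pA P a); lra.
case/Rsum_nz => x hx.
have hp : 0 < pXA P x a by have := pXA_ge0 x a; lra.
have := hf x a hp; have := pA0_ge x a; lra.
Qed.

Lemma g_form : Hfin -> forall a, 0 < pA P a ->
  let u := pA0 P a / (pL0 P * pA P a) in
  0 < u /\ g a = pA P a * (u - 1 - ln u) / ln 2.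
Proof.
move=> hf a hA u.
have hA0 := pA0_pos hf a hA.
have hL := pL0_pos.
have h2 := ln2_pos.
have hu : 0 < u by apply: Rdiv_lt_0_compat => //; apply: Rmult_lt_0_compat.
split => //.
have Hu : ln u = ln (pA0 P a) - ln (pL0 P) - ln (pA P a).
  rewrite /u lndiv ?ln_mult //; [ring | by apply: Rmult_lt_0_compat].
rewrite Hu /g /q /log2 lndiv ?ln_mult //; last by apply: Rmult_lt_0_compat.
rewrite /u; field; lra.
Qed.

Lemma g_ge0 : Hfin -> forall a, 0 <= g a.
Proof.
move=> hf a; case: (Req_dec (pA P a) 0) => [e|hne].
  rewrite /g e /q; have := pL0_pos; have := pA0_ge0 a; have := ln2_pos => h2 h1 h3.
  have -> : 0 * log2 (0 * pL0 P / pA0 P a) + -1 / ln 2 * 0 + 1 / ln 2 * (pA0 P a / pL0 P)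
     = pA0 P a / (pL0 P * ln 2) by field; lra.
  apply: Rmult_le_pos => //; apply: Rlt_le; apply: Rinv_0_lt_compat; nra.
have hA : 0 < pA P a by have := pA_ge0 a; lra.
have [hu ->] := g_form hf a hA.
have := ln_le _ hu; have := ln2_pos => h2 h3.
apply: Rmult_le_pos; first by nra.
by apply: Rlt_le; apply: Rinv_0_lt_compat.
Qed.

Lemma D_ge0 : Hfin -> 0 <= D.
Proof. by move=> hf; rewrite D_g; apply: Rsum_ge0 => a; apply: g_ge0. Qed.

Lemma D_eq0 : Hfin -> (D = 0 <-> forall a, pA P a = pA0 P a / pL0 P).
Proof.
move=> hf; split.
  rewrite D_g => H a; have := Rsum_eq0 g (g_ge0 hf) H a.
  case: (Req_dec (pA P a) 0) => [e|hne].
    rewrite /g e /q; have := pL0_pos; have := ln2_pos => h2 h1 hg.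
    have : pA0 P a / (pL0 P * ln 2) = 0.
      rewrite -hg; field; lra.
    move=> h; rewrite /Rdiv in h; case: (Rmult_integral _ _ h) => h'.
      rewrite h'; field; lra.
    by exfalso; apply: (Rinv_neq_0_compat (pL0 P * ln 2)); [nra|].
  have hA : 0 < pA P a by have := pA_ge0 a; lra.
  have [hu ->] := g_form hf a hA.
  have h2 := ln2_pos; have hL := pL0_pos => hg.
  have h0 : pA P a * (pA0 P a / (pL0 P * pA P a) - 1 - ln (pA0 P a / (pL0 P * pA P a))) = 0.
    have : pA P a * (pA0 P a / (pL0 P * pA P a) - 1 - ln (pA0 P a / (pL0 P * pA P a))) / ln 2 * ln 2 = 0 by rewrite hg; ring.
    move=> h; rewrite -h; field; lra.
  case: (Rmult_integral _ _ h0) => h'; first lra.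
  have := ln_eq _ hu; move=> hh; have h1 := hh ltac:(lra).
  have : pA0 P a = pL0 P * pA P a.
    have -> : pA0 P a = pA0 P a / (pL0 P * pA P a) * (pL0 P * pA P a) by field; lra.
    rewrite h1; ring.
  move=> ->; field; lra.
move=> H; rewrite /D; rewrite /Rsum big1 // => a _.
case: (Req_dec (pA P a) 0) => [->|hne]; first ring.
have hL := pL0_pos.
have -> : pA P a * pL0 P / pA0 P a = 1.
  have hA0 : pA0 P a <> 0.
    move=> e; apply: hne; rewrite H e /Rdiv Rmult_0_l //.
  rewrite H; field; split => //; lra.
by rewrite /log2 ln_1 /Rdiv Rmult_0_l Rmult_0_r.
Qed.

Lemma main_res :
  ele (Fin (mutinfo P)) (esub (suspXA P) (suspX P)) /\
  ((forall (x : X) (a : A), 0 < pXA P x a -> 0 < pXA0 P x a / pXA P x a) ->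
   (esub (suspXA P) (suspX P) = Fin (mutinfo P) <->
    forall a : A, pA P a = pA0 P a / pL0 P)).
Proof.
split.
  case: (classic Hfin) => hf.
    rewrite suspXA_fin // suspX_e /= (key hf); have := D_ge0 hf; lra.
  by rewrite suspXA_inf // suspX_e.
move=> H2.
have hf : Hfin.
  move=> x a hp; have h := H2 x a hp.
  have -> : P false x a = pXA0 P x a / pXA P x a * pXA P x a by rewrite /pXA0; field; lra.
  by apply: Rmult_lt_0_compat.
rewrite suspXA_fin // suspX_e /= (key hf) -(D_eq0 hf); split.
  by case=> h; lra.
by move=> ->; congr Fin; ring.
Qed.
End Main.

Theorem theorem3p1 (X A : finType) (P : bool -> X -> A -> R)
  (Pnn : forall l x a, 0 <= P l x a)
  (Psum : Rsum (fun l : bool => Rsum (fun x : X => Rsum (fun a : A => P l x a))) = 1)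
  (* conditioned on L = 0, A is independent of X *)
  (Hind : forall (x : X) (a : A), 0 < pX0 P x ->
     P false x a / pX0 P x = pA0 P a / pL0 P)
  (* Pr(L = 0 | X = x) > 0 on the support of X *)
  (HposX : forall x : X, 0 < pX P x -> 0 < pX0 P x / pX P x) :
  ele (Fin (mutinfo P)) (esub (suspXA P) (suspX P)) /\
  ((forall (x : X) (a : A), 0 < pXA P x a -> 0 < pXA0 P x a / pXA P x a) ->
   (esub (suspXA P) (suspX P) = Fin (mutinfo P) <->
    forall a : A, pA P a = pA0 P a / pL0 P)).
Proof. by apply: main_res. Qed.
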